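(* Let $A$ and $B$ be (possibly isomorphic) strongly regular graphs with the same parameters, and let $A'$, $B'$ be obtained by individualizing a single vertex $a_1\in V(A)$, resp. $b_1\in V(B)$ (coloring it with color $1$; all other vertices uncolored). Let $G=G(A',B')$ and $H=G(A',A')$. (1) $\omega^{(r)}(G)=\omega^{(r)}(H)$ for all integers $r\ge0$, and therefore $\omega^{(\bullet)}(G)=\omega^{(\bullet)}(H)$. (2) If $\mathrm{WL}_{3/2}(A')\ne\mathrm{WL}_{3/2}(B')$, then $\mathrm{WL}_{3/2}(G)\ne\mathrm{WL}_{3/2}(H)$.
   Context: Graphs are finite, simple and undirected. A strongly regular graph with parameters $(n,d,\lambda,\mu)$ is an $n$-vertex $d$-regular graph in which any two adjacent vertices have $\lambda$ common neighbours and any two distinct non-adjacent vertices have $\mu$ common neighbours. Construction $G(A',B')$ (uncolored) for $m=1$: the vertex-disjoint union of $A$ and $B$ plus a connecting vertex $c_1$ adjacent to $a_1$ and $b_1$ and one pendant vertex $p_{1,1}$ adjacent only to $c_1$. $H=G(A',A')$ is built in the same way from two disjoint copies of $A'$. Walk invariants: $w_k(x,y)$ = number of walks of length $k$ from $x$ to $y$ in an $N$-vertex graph, $w_*(x,y)=(w_0(x,y),\dots,w_{N-1}(x,y))$; $\omega_0(x)=w_*(x,x)$, $\omega_{r+1}(x)=\big(\omega_r(x),\{\!\{(w_*(x,y),\omega_r(y))\}\!\}_{y}\big)$ ($\{\!\{\cdot\}\!\}$ = multiset); $\omega^{(r)}(G)=\{\!\{\omega_r(x)\}\!\}_{x\in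 V(G)}$ and $\omega^{(\bullet)}(G)=\omega^{(N)}(G)$. Color refinement on a vertex-colored $N$-vertex graph $X$: $C^0(x)$ is the color of $x$ (common default for uncolored vertices), $C^{r+1}(x)=\big(C^r(x),\{\!\{C^r(y)\}\!\}_{y\in N(x)}\big)$, $\mathrm{WL}_1(X)=\{\!\{C^N(x)\}\!\}_{x}$. For a vertex $x$, $X_x$ is $X$ with $x$ additionally given a special new color (the same special color for every choice of $x$, distinct from all colors already used). $\mathrm{WL}_{3/2}(X)=\{\!\{\mathrm{WL}_1(X_x)\}\!\}_{x\in V(X)}$. *)

(* Defs.v *)
From mathcomp Require Import all_boot.
Set Implicit Arguments. Unset Strict Implicit. Unset Printing Implicit Defensive.

Definition simple_graph (V : finType) (e : rel V) : Prop :=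
  symmetric e /\ irreflexive e.

Definition srg (V : finType) (e : rel V) (n d lam mu : nat) : Prop :=
  [/\ simple_graph e,
      #|V| = n,
      (forall x : V, #|[set y | e x y]| = d),
      (forall x y : V, e x y -> #|[set z | e x z && e y z]| = lam)
    & (forall x y : V, x != y -> ~~ e x y -> #|[set z | e x z && e y z]| = mu)].

(* Vertices: inl (inl a) = vertices of A, inl (inr b) = vertices of B,
   inr false = connecting vertex c_1, inr true = pendant vertex p_{1,1}. *)
Definition GV (VA VB : finType) : finType := ((VA + VB) + bool)%type.

Definition Gedge (VA VB : finType) (eA : rel VA) (a1 : VA) (eB : rel VB) (b1 : VB)
  : rel (GV VA VB) :=
  fun u v =>
    match u, v with
    | inl (inl x), inl (inl y) => eA x y
    | inl (inr x), inl (inr y) => eB x y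
    | inl (inl x), inr false => x == a1
    | inr false, inl (inl x) => x == a1
    | inl (inr x), inr false => x == b1
    | inr false, inl (inr x) => x == b1
    | inr false, inr true => true
    | inr true, inr false => true
    | _, _ => false
    end.

(* A finite multiset of codes is represented canonically by its sorted list:
   msetn s = msetn t  <->  perm_eq s t. Structured values (tuples, sequences,
   multisets) are encoded injectively as natural numbers via [pickle]. *)
Definition msetn (s : seq nat) : seq nat := sort leq s.

Fixpoint walks (V : finType) (e : rel V) (k : nat) (x y : V) : nat :=
  match k with
  | 0 => nat_of_bool (x == y)
  | k'.+1 => \sum_(z | e x z) walks e k' z y
  end.

Definition wstar (V : finType) (e : rel V) (x y : V) : seq nat :=
  mkseq (fun k => walks e k x y) #|V|.

Fixpoint omega_v (V : finType) (e : rel V) (r : nat) (x : V) : nat :=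
  match r with
  | 0 => pickle (wstar e x x)
  | r'.+1 => pickle (omega_v e r' x,
                     msetn [seq pickle (wstar e x y, omega_v e r' y) | y <- enum V])
  end.

Definition omega (V : finType) (e : rel V) (r : nat) : seq nat :=
  msetn [seq omega_v e r x | x <- enum V].

Definition omega_bullet (V : finType) (e : rel V) : seq nat := omega e #|V|.

(* Vertex colors are [option nat]: ordinary colors are [Some c]
   (uncolored = Some 0, individualized = Some 1); [None] is the special
   new color used for X_x. *)
Fixpoint cr (V : finType) (e : rel V) (col : V -> option nat) (r : nat) (x : V) : nat :=
  match r with
  | 0 => pickle (col x)
  | r'.+1 => pickle (cr e col r' x,
                     msetn [seq cr e col r' y | y <- enum V & e x y])
  end.

Definition WL1 (V : finType) (e : rel V) (col : V -> option nat) : seq nat :=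
  msetn [seq cr e col #|V| x | x <- enum V].

Definition indiv (V : finType) (col : V -> option nat) (x : V) : V -> option nat :=
  fun y => if y == x then None else col y.

Definition WL32 (V : finType) (e : rel V) (col : V -> option nat) : seq nat :=
  msetn [seq pickle (WL1 e (indiv col x)) | x <- enum V].

Definition uncolored (V : finType) : V -> option nat := fun _ => Some 0.

Definition indiv1 (V : finType) (a1 : V) : V -> option nat :=
  fun y => if y == a1 then Some 1 else Some 0.

(* Main.v *)
Require Import Defs.
From mathcomp Require Import all_boot zify.
Set Implicit Arguments. Unset Strict Implicit. Unset Printing Implicit Defensive.

Lemma msetn_perm s t : perm_eq s t -> msetn s = msetn t.
Proof. by move=> h; apply/(perm_sortP leq_total leq_trans anti_leq). Qed.

Lemma perm_msetn s t : msetn s = msetn t -> perm_eq s t.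
Proof. by move=> h; apply/(perm_sortP leq_total leq_trans anti_leq). Qed.

Lemma msetnP s : perm_eq (msetn s) s.
Proof. by rewrite /msetn perm_sort. Qed.

Lemma perm_rem (T : eqType) (x : T) s t : perm_eq s t -> perm_eq (rem x s) (rem x t).
Proof.
move=> h; apply/permP => P.
have [xs|xns] := boolP (x \in s).
  have xt : x \in t by rewrite -(perm_mem h).
  have := permP h P; rewrite (permP (perm_to_rem xs)) (permP (perm_to_rem xt)) /=.
  by move/eqP; rewrite eqn_add2l => /eqP.
have xnt : x \notin t by rewrite -(perm_mem h).
by rewrite !rem_id //; apply/permP.
Qed.

Definition mrem (X s : seq nat) := foldr (fun x acc => rem x acc) s X.

Lemma mremP X Y s : perm_eq s (X ++ Y) -> perm_eq (mrem X s) Y.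
Proof.
elim: X Y s => [|x X IH] Y s /= h; first by [].
have h2 : perm_eq s (X ++ x :: Y).
  by rewrite (permPl h) -cat1s perm_catCA.
have := IH _ _ h2 => h3.
by have := perm_rem x h3; rewrite /= eqxx.
Qed.

Lemma card_count (T : finType) (P : pred T) : #|[set x | P x]| = count P (enum T).
Proof. by rewrite cardsE cardE /enum_mem size_filter count_filter; apply: eq_count => x; rewrite /= !inE andbT. Qed.

Definition rel3 (V : finType) (e : rel V) (x y : V) : nat :=
  if x == y then 0 else if e x y then 1 else 2.

Lemma count_split3 (T : Type) (f : T -> nat) (P : pred T) s :
  (forall z, f z < 3) ->
  count P s = count (fun z => P z && (f z == 0)) s + count (fun z => P z && (f z == 1)) s
     + count (fun z => P z && (f z == 2)) s.
Proof.
move=> hf; elim: s => //= z s ->; have := hf z.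
case: (P z) => /=; case: (f z) => [|[|[|k]]] //= _; lia.
Qed.

Definition Canon2 (n d lam mu i : nat) : seq (nat * nat) :=
 match i with
 | 0 => (0,0) :: nseq d (1,1) ++ nseq (n.-1 - d) (2,2)
 | 1 => (0,1) :: (1,0) :: nseq lam (1,1) ++ nseq (d.-1 - lam) (1,2) ++ nseq (d.-1 - lam) (2,1)
          ++ nseq ((n.-1 - d) - (d.-1 - lam)) (2,2)
 | _ => (0,2) :: (2,0) :: nseq mu (1,1) ++ nseq (d - mu) (1,2) ++ nseq (d - mu) (2,1)
          ++ nseq ((n.-1 - d).-1 - (d - mu)) (2,2)
 end.

Lemma perm_grid (s t : seq (nat * nat)) :
  (forall p, p \in s ++ t -> (p.1 < 3) && (p.2 < 3)) ->
  (forall r j, r < 3 -> j < 3 -> count_mem (r, j) s = count_mem (r, j) t) ->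
  perm_eq s t.
Proof.
move=> hin hc; rewrite /perm_eq; apply/allP => [[r j]] /hin /= /andP [hr hj].
by apply/eqP; apply: hc.
Qed.

Section SRG.
Variables (V : finType) (e : rel V) (n d lam mu : nat).
Hypothesis H : srg e n d lam mu.

Lemma srg_sym : symmetric e. Proof. by case: H => [[hs hi] _ _ _ _]. Qed.
Lemma srg_irr : irreflexive e. Proof. by case: H => [[hs hi] _ _ _ _]. Qed.
Lemma srg_card : #|V| = n. Proof. by case: H. Qed.
Lemma srg_deg x : count (e x) (enum V) = d.
Proof. by case: H => _ _ h _ _; rewrite -(h x) card_count. Qed.
Lemma srg_lam x y : e x y -> count (fun z => e x z && e y z) (enum V) = lam.
Proof. by case: H => _ _ _ h _ /h; rewrite card_count. Qed.
Lemma srg_mu x y : x != y -> ~~ e x y -> count (fun z => e x z && e y z) (enum V) = mu.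
Proof. by case: H => _ _ _ _ h xy /(h _ _ xy); rewrite card_count. Qed.

Lemma rel3_lt x y : rel3 e x y < 3.
Proof. by rewrite /rel3; case: eqP => //; case: (e x y). Qed.

Lemma rel3_sym x y : rel3 e x y = rel3 e y x.
Proof. by rewrite /rel3 eq_sym srg_sym. Qed.

Lemma rel3_0 x y : (rel3 e x y == 0) = (x == y).
Proof. by rewrite /rel3; case: (x == y); case: (e x y). Qed.

Lemma rel3_1 x y : (rel3 e x y == 1) = e x y.
Proof.
rewrite /rel3; case: (x =P y) => [->|_]; first by rewrite srg_irr.
by case: (e x y).
Qed.

Lemma rel3_2 x y : (rel3 e x y == 2) = (x != y) && ~~ e x y.
Proof. by rewrite /rel3; case: (x == y) => //; case: (e x y). Qed.

Lemma count_eq1 x : count (fun z => x == z) (enum V) = 1.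
Proof.
rewrite (eq_count (a2 := pred1 x)); last by move=> z; rewrite /= eq_sym.
by rewrite count_uniq_mem ?enum_uniq // mem_enum.
Qed.

Lemma count_rel x r : count (fun z => rel3 e x z == r) (enum V) =
  if r == 0 then 1 else if r == 1 then d else if r == 2 then n.-1 - d else 0.
Proof.
have tot : count predT (enum V) = n by rewrite count_predT -cardT srg_card.
have s3 := @count_split3 V (rel3 e x) predT (enum V) (rel3_lt x).
rewrite tot /= in s3.
have c0 : count (fun z => rel3 e x z == 0) (enum V) = 1.
  by rewrite -(count_eq1 x); apply: eq_count => z; rewrite rel3_0.
have c1 : count (fun z => rel3 e x z == 1) (enum V) = d.
  by rewrite -(srg_deg x); apply: eq_count => z; rewrite rel3_1.
rewrite c0 c1 in s3.
case: r => [|[|[|r]]] //=.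
- lia.
- rewrite (eq_count (a2 := pred0)) ?count_pred0 // => z /=.
  by have := rel3_lt x z; case: (rel3 e x z) => [|[|[|k]]].
Qed.

Lemma L2 x a : perm_eq [seq (rel3 e x z, rel3 e z a) | z <- enum V] (Canon2 n d lam mu (rel3 e x a)).
Proof.
set N := fun r j => count (fun z => (rel3 e x z == r) && (rel3 e z a == j)) (enum V).
have key r j : count_mem (r, j) [seq (rel3 e x z, rel3 e z a) | z <- enum V] = N r j.
  by rewrite count_map; apply: eq_count => z /=; rewrite xpair_eqE.
have row r : N r 0 + N r 1 + N r 2 =
  if r == 0 then 1 else if r == 1 then d else if r == 2 then n.-1 - d else 0.
  rewrite -(count_rel x) (@count_split3 V (fun z => rel3 e z a) _ (enum V)) //.
  by move=> z; apply: rel3_lt.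
have col j : N 0 j + N 1 j + N 2 j =
  if j == 0 then 1 else if j == 1 then d else if j == 2 then n.-1 - d else 0.
  rewrite -(count_rel a) (@count_split3 V (fun z => rel3 e x z) _ (enum V)); last first.
    by move=> z; apply: rel3_lt.
  rewrite /N; congr (_ + _ + _); apply: eq_count => z; rewrite andbC rel3_sym //.
have n0 j : N 0 j = (rel3 e x a == j).
  rewrite /N (eq_count (a2 := fun z => (x == z) && (rel3 e x a == j))).
    case: (rel3 e x a == j).
      by rewrite (eq_count (a2 := fun z => x == z)) ?count_eq1 // => z; rewrite andbT.
    by rewrite (eq_count (a2 := pred0)) ?count_pred0 // => z; rewrite andbF.
  move=> z; rewrite rel3_0; case: (x =P z) => [->|] //.
have m0 r : N r 0 = (rel3 e x a == r).
  rewrite /N (eq_count (a2 := fun z => (a == z) && (rel3 e x a == r))).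
    case: (rel3 e x a == r).
      by rewrite (eq_count (a2 := fun z => a == z)) ?count_eq1 // => z; rewrite andbT.
    by rewrite (eq_count (a2 := pred0)) ?count_pred0 // => z; rewrite andbF.
  move=> z; rewrite rel3_0 (eq_sym z); case: (a =P z) => [->|] //; by rewrite andbC.
have n11 : N 1 1 = if rel3 e x a == 0 then d else if rel3 e x a == 1 then lam else mu.
  rewrite /N (eq_count (a2 := fun z => e x z && e a z)); last first.
    by move=> z; rewrite !rel3_1 (srg_sym z).
  case: (x =P a) => [<-|/eqP xa].
    rewrite /rel3 eqxx /= -(srg_deg x); apply: eq_count => z; rewrite (srg_sym x z) andbb //.
  have := rel3_1 x a; have := rel3_0 x a; rewrite (negbTE xa) => ->.
  case exa: (e x a) => h1.
    by rewrite h1 (srg_lam exa).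
  rewrite (srg_mu xa) ?exa //; move: h1; rewrite /rel3 (negbTE xa) exa //.
have hi := rel3_lt x a.
apply: perm_grid.
  move=> [r j]; rewrite mem_cat => /orP [].
    by move/mapP => [z _ [-> ->]]; rewrite !rel3_lt.
  move=> hm; suff /allP : all (fun p : nat * nat => (p.1 < 3) && (p.2 < 3)) (Canon2 n d lam mu (rel3 e x a)).
    by move=> /(_ _ hm).
  by case: (rel3 e x a) => [|[|[|k]]]; rewrite /= !all_cat !all_nseq /= ?orbT.
move=> r j hr hj; rewrite key.
have r0 := row 0; have r1 := row 1; have r2 := row 2.
have c0 := col 0; have c1 := col 1; have c2 := col 2.
have n00 := n0 0; have n01 := n0 1; have n02 := n0 2.
have m00 := m0 0; have m01 := m0 1; have m02 := m0 2.
move: n11 r0 r1 r2 c0 c1 c2 n00 n01 n02 m00 m01 m02.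
move: (rel3 e x a) hi => [|[|[|k]]] // _ /=; rewrite !count_cat !count_nseq /=;
move: r j hr hj => [|[|[|r]]] [|[|[|j]]] //= _ _; lia.
Qed.

End SRG.

Lemma sumE_enum (T : finType) (P : pred T) (F : T -> nat) :
  \sum_(y | P y) F y = \sum_(y <- enum T | P y) F y.
Proof. by rewrite big_enum_cond. Qed.

Definition CN (n d lam mu i : nat) : seq nat := [seq p.2 | p <- Canon2 n d lam mu i & p.1 == 1].
Definition Canon1 (n d lam mu : nat) : seq nat := [seq p.2 | p <- Canon2 n d lam mu 0].

Section SRG2.
Variables (V : finType) (e : rel V) (n d lam mu : nat).
Hypothesis H : srg e n d lam mu.

Lemma L_nbr x a : perm_eq [seq rel3 e y a | y <- enum V & e x y] (CN n d lam mu (rel3 e x a)).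
Proof.
have h := perm_map snd (perm_filter (fun p : nat * nat => p.1 == 1) (L2 H x a)).
apply: perm_trans h.
have -> : [seq i.2 | i <- [seq (rel3 e x z, rel3 e z a) | z <- enum V] & i.1 == 1] = [seq rel3 e z a | z <- enum V & e x z].
  rewrite filter_map -map_comp; congr map; apply: eq_filter => z /=; exact: rel3_1 H x z.
exact: perm_refl.
Qed.

Lemma L_vt a : perm_eq [seq rel3 e z a | z <- enum V] (Canon1 n d lam mu).
Proof.
have h := perm_map snd (L2 H a a); move: h.
have -> : rel3 e a a = 0 by rewrite /rel3 eqxx.
by rewrite -map_comp.
Qed.

Lemma L_sum x a (G : nat -> nat) :
  \sum_(y | e x y) G (rel3 e y a) = \sum_(t <- CN n d lam mu (rel3 e x a)) G t.
Proof.
rewrite -(perm_big _ (L_nbr x a)) big_map big_filter.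
by rewrite big_enum_cond.
Qed.
End SRG2.

Section Enum.
Variables VA VB : finType.

Definition GL : seq (GV VA VB) :=
  [seq inl (inl a) | a <- enum VA] ++ [seq inl (inr b) | b <- enum VB] ++ [:: inr false; inr true].

Lemma enumG : perm_eq (enum (GV VA VB)) GL.
Proof.
apply: uniq_perm; first exact: enum_uniq.
  rewrite /GL cat_uniq map_inj_uniq ?enum_uniq; last by move=> x y [].
  rewrite cat_uniq map_inj_uniq ?enum_uniq; last by move=> x y [].
  rewrite /= !andbT; apply/andP; split.
    apply/hasPn => y; rewrite mem_cat !inE => /orP [/mapP [b _ ->]|/orP [] /eqP ->];
      by apply/mapP => [[? _]].
  by apply/norP; split; [|apply/norP; split] => //; apply/mapP => [[? _]].
move=> x; rewrite mem_enum /GL !mem_cat; case: x => [[a|b]|[]] /=.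
- by rewrite (map_f (fun a => inl (inl a) : GV VA VB)) ?mem_enum.
- by rewrite (map_f (fun b => inl (inr b) : GV VA VB)) ?mem_enum ?orbT.
- by rewrite !inE !orbT.
- by rewrite !inE !orbT.
Qed.

Lemma sumG (P : pred (GV VA VB)) (F : GV VA VB -> nat) :
  \sum_(y | P y) F y = \sum_(a | P (inl (inl a))) F (inl (inl a)) +
    \sum_(b | P (inl (inr b))) F (inl (inr b)) +
    (P (inr false)) * F (inr false) + (P (inr true)) * F (inr true).
Proof.
rewrite sumE_enum (perm_big _ enumG) /GL !big_cat !big_map /=.
rewrite (sumE_enum (fun a => P (inl (inl a)))) (sumE_enum (fun b => P (inl (inr b)))) !big_cons !big_nil.
by case: (P (inr false)); case: (P (inr true)); rewrite /= ?mul1n ?mul0n ?addn0 ?add0n ?addnA.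
Qed.
End Enum.

Inductive Q := Qf of nat | Qh of nat & nat | Qg of nat & nat | Qs of nat | Qt of nat
  | Qcs of nat | Qps of nat | Qcc | Qcp | Qpc | Qpp.

Section Walks.
Variables (n d lam mu : nat).
Notation CN' := (CN n d lam mu).

Fixpoint Wq (k : nat) (q : Q) : nat :=
 match k with
 | 0 => match q with Qf r => nat_of_bool (r == 0) | Qcc => 1 | Qpp => 1 | _ => 0 end
 | k'.+1 => match q with
   | Qf r => \sum_(t <- CN' r) Wq k' (Qf t)
   | Qh i j => \sum_(s <- CN' i) Wq k' (Qh s j) + (i == 0) * Wq k' (Qcs j)
   | Qg i j => \sum_(s <- CN' i) Wq k' (Qg s j) + (i == 0) * Wq k' (Qcs j)
   | Qs i => \sum_(s <- CN' i) Wq k' (Qs s) + (i == 0) * Wq k' Qcc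
   | Qt i => \sum_(s <- CN' i) Wq k' (Qt s) + (i == 0) * Wq k' Qcp
   | Qcs j => Wq k' (Qf j) + Wq k' (Qh 0 j) + Wq k' (Qg 0 j) + Wq k' (Qps j)
   | Qps j => Wq k' (Qcs j)
   | Qcc => Wq k' (Qs 0) + Wq k' (Qs 0) + Wq k' Qpc
   | Qcp => Wq k' (Qt 0) + Wq k' (Qt 0) + Wq k' Qpp
   | Qpc => Wq k' Qcc
   | Qpp => Wq k' Qcp
   end
 end.

Definition Wd (k : nat) (D : nat * nat * nat * nat) : nat :=
  let: (t, r, i, j) := D in
  match t with
  | 0 => Wq k (Qf r) + Wq k (Qh i j)
  | 1 => Wq k (Qg i j)
  | 2 => Wq k (Qs i)
  | 3 => Wq k (Qt i)
  | 4 => Wq k (Qcs j)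
  | 5 => Wq k (Qps j)
  | _ => if i == 0 then (if j == 0 then Wq k Qcc else Wq k Qcp)
         else (if j == 0 then Wq k Qpc else Wq k Qpp)
  end.

Variables (VA VB : finType) (eA : rel VA) (eB : rel VB) (a1 : VA) (b1 : VB).
Hypothesis HA : srg eA n d lam mu.
Hypothesis HB : srg eB n d lam mu.

Definition vtA a := rel3 eA a a1.
Definition vtB b := rel3 eB b b1.

Definition desc (x z : GV VA VB) : nat * nat * nat * nat :=
 match x, z with
 | inl (inl a), inl (inl a') => (0, rel3 eA a a', vtA a, vtA a')
 | inl (inl a), inl (inr b) => (1, 0, vtA a, vtB b)
 | inl (inr b), inl (inr b') => (0, rel3 eB b b', vtB b, vtB b')
 | inl (inr b), inl (inl a) => (1, 0, vtB b, vtA a)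
 | inl (inl a), inr false => (2, 0, vtA a, 0)
 | inl (inl a), inr true => (3, 0, vtA a, 0)
 | inl (inr b), inr false => (2, 0, vtB b, 0)
 | inl (inr b), inr true => (3, 0, vtB b, 0)
 | inr false, inl (inl a) => (4, 0, 0, vtA a)
 | inr false, inl (inr b) => (4, 0, 0, vtB b)
 | inr true, inl (inl a) => (5, 0, 0, vtA a)
 | inr true, inl (inr b) => (5, 0, 0, vtB b)
 | inr bx, inr bz => (6, 0, nat_of_bool bx, nat_of_bool bz)
 end.

Notation G := (Gedge eA a1 eB b1).

Lemma nbrA a (F : GV VA VB -> nat) :
  \sum_(y | G (inl (inl a)) y) F y = \sum_(y | eA a y) F (inl (inl y)) + (a == a1) * F (inr false).
Proof. by rewrite sumG /= big_pred0_eq mul0n !addn0. Qed.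

Lemma nbrB b (F : GV VA VB -> nat) :
  \sum_(y | G (inl (inr b)) y) F y = \sum_(y | eB b y) F (inl (inr y)) + (b == b1) * F (inr false).
Proof. by rewrite sumG /= big_pred0_eq mul0n add0n addn0. Qed.

Lemma nbrC (F : GV VA VB -> nat) :
  \sum_(y | G (inr false) y) F y = F (inl (inl a1)) + F (inl (inr b1)) + F (inr true).
Proof. by rewrite sumG /= !big_pred1_eq mul0n addn0 mul1n. Qed.

Lemma nbrP (F : GV VA VB -> nat) :
  \sum_(y | G (inr true) y) F y = F (inr false).
Proof. by rewrite sumG /= !big_pred0_eq mul1n mul0n addn0. Qed.

Lemma walksE k x z : walks G k x z = Wd k (desc x z).
Proof.
elim: k x z => [|k IH] x z.
  case: x => [[a|b]|[]]; case: z => [[a'|b']|[]] => //=.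
  - by rewrite addn0 rel3_0.
  - by rewrite addn0 rel3_0.
rewrite /= (eq_bigr (fun y => Wd k (desc y z))) => [|y _]; last exact: IH.
have vA1 : vtA a1 = 0 by rewrite /vtA /rel3 eqxx.
have vB1 : vtB b1 = 0 by rewrite /vtB /rel3 eqxx.
case: x => [[a|b]|[]].
- rewrite nbrA.
  case: z => [[a'|b']|[]] /=.
  + rewrite big_split /= (L_sum HA a a' (fun t => Wq k (Qf t))) (L_sum HA a a1 (fun t => Wq k (Qh t (vtA a')))).
    by rewrite -/(vtA a) rel3_0 addnA.
  + by rewrite (L_sum HA a a1 (fun t => Wq k (Qg t (vtB b')))) -/(vtA a) rel3_0.
  + by rewrite (L_sum HA a a1 (fun t => Wq k (Qt t))) -/(vtA a) rel3_0.
  + by rewrite (L_sum HA a a1 (fun t => Wq k (Qs t))) -/(vtA a) rel3_0.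
- rewrite nbrB.
  case: z => [[a'|b']|[]] /=.
  + by rewrite (L_sum HB b b1 (fun t => Wq k (Qg t (vtA a')))) -/(vtB b) rel3_0.
  + rewrite big_split /= (L_sum HB b b' (fun t => Wq k (Qf t))) (L_sum HB b b1 (fun t => Wq k (Qh t (vtB b')))).
    by rewrite -/(vtB b) rel3_0 addnA.
  + by rewrite (L_sum HB b b1 (fun t => Wq k (Qt t))) -/(vtB b) rel3_0.
  + by rewrite (L_sum HB b b1 (fun t => Wq k (Qs t))) -/(vtB b) rel3_0.
- rewrite nbrP.
  by case: z => [[a'|b']|[]] /=.
- rewrite nbrC.
  case: z => [[a'|b']|[]] /=; rewrite ?vA1 ?vB1.
  + by rewrite (rel3_sym HA) -/(vtA a').
  + rewrite (rel3_sym HB) -/(vtB b'); lia.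
  + by [].
  + by [].
Qed.

End Walks.

Section Desc.
Variables (n d lam mu : nat).
Notation C2 := (Canon2 n d lam mu).
Notation C1 := (Canon1 n d lam mu).

Definition DC (i : nat) : seq (nat * nat * nat * nat) :=
  if i < 3 then
    [seq (0, p.1, i, p.2) | p <- C2 i] ++ [seq (1, 0, i, j) | j <- C1] ++ [:: (2, 0, i, 0); (3, 0, i, 0)]
  else if i == 3 then
    [seq (4, 0, 0, j) | j <- C1] ++ [seq (4, 0, 0, j) | j <- C1] ++ [:: (6, 0, 0, 0); (6, 0, 0, 1)]
  else
    [seq (5, 0, 0, j) | j <- C1] ++ [seq (5, 0, 0, j) | j <- C1] ++ [:: (6, 0, 1, 0); (6, 0, 1, 1)].

Definition KC : seq nat := C1 ++ C1 ++ [:: 3; 4].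

Definition kd (D : nat * nat * nat * nat) : nat :=
  let: (t, r, i, j) := D in
  match t with 2 => 3 | 3 => 4 | 6 => 3 + j | _ => j end.

Definition dself (i : nat) : nat * nat * nat * nat :=
  if i < 3 then (0, 0, i, i) else if i == 3 then (6, 0, 0, 0) else (6, 0, 1, 1).

Variables (VA VB : finType) (eA : rel VA) (eB : rel VB) (a1 : VA) (b1 : VB).
Hypothesis HA : srg eA n d lam mu.
Hypothesis HB : srg eB n d lam mu.

Definition kap (x : GV VA VB) : nat :=
  match x with
  | inl (inl a) => vtA eA a1 a
  | inl (inr b) => vtB eB b1 b
  | inr false => 3
  | inr true => 4
  end.

Notation desc' := (desc eA eB a1 b1).

Lemma kap_desc x z : kap z = kd (desc' x z).
Proof. by case: x => [[a|b]|[]]; case: z => [[a'|b']|[]]. Qed.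

Lemma kap_self x : desc' x x = dself (kap x).
Proof.
have hA a : vtA eA a1 a < 3 by apply: rel3_lt.
have hB b : vtB eB b1 b < 3 by apply: rel3_lt.
case: x => [[a|b]|[]] /=; rewrite /dself //.
- by rewrite hA /rel3 eqxx.
- by rewrite hB /rel3 eqxx.
Qed.

Lemma perm_comp (A : Type) (B C : eqType) (s : seq A) (f : A -> B) (g : B -> C) (h : A -> C) (t : seq B) :
  (forall a, h a = g (f a)) -> perm_eq (map f s) (map id t) -> perm_eq (map h s) (map g t).
Proof.
move=> hh hp; rewrite (eq_map hh) map_comp; apply: perm_map; by rewrite map_id in hp.
Qed.

Lemma desc_perm x : perm_eq [seq desc' x z | z <- enum (GV VA VB)] (DC (kap x)).
Proof.
apply: perm_trans (perm_map _ (enumG VA VB)) _.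
rewrite /GL !map_cat -!map_comp /DC.
have hA a : vtA eA a1 a < 3 by apply: rel3_lt.
have hB b : vtB eB b1 b < 3 by apply: rel3_lt.
case: x => [[a|b]|[]]; cbn [kap].
- rewrite hA; apply: perm_cat.
    apply: (perm_comp (f := fun z => (rel3 eA a z, rel3 eA z a1))) => //.
    by rewrite map_id -enumT; apply: L2.
  apply: perm_cat; last by [].
  apply: (perm_comp (f := fun z => vtB eB b1 z)) => //.
  by rewrite map_id -enumT; apply: L_vt.
- rewrite hB perm_catCA; apply: perm_cat.
    apply: (perm_comp (f := fun z => (rel3 eB b z, rel3 eB z b1))) => //.
    by rewrite map_id -enumT; apply: L2.
  apply: perm_cat; last by [].
  apply: (perm_comp (f := fun z => vtA eA a1 z)) => //.
  by rewrite map_id -enumT; apply: L_vt.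
- apply: perm_cat.
    apply: (perm_comp (f := fun z => vtA eA a1 z)) => //.
    by rewrite map_id -enumT; apply: L_vt.
  apply: perm_cat; last by [].
  apply: (perm_comp (f := fun z => vtB eB b1 z)) => //.
  by rewrite map_id -enumT; apply: L_vt.
- apply: perm_cat.
    apply: (perm_comp (f := fun z => vtA eA a1 z)) => //.
    by rewrite map_id -enumT; apply: L_vt.
  apply: perm_cat; last by [].
  apply: (perm_comp (f := fun z => vtB eB b1 z)) => //.
  by rewrite map_id -enumT; apply: L_vt.
Qed.

Lemma kap_perm : perm_eq [seq kap x | x <- enum (GV VA VB)] KC.
Proof.
apply: perm_trans (perm_map _ (enumG VA VB)) _.
rewrite /GL !map_cat /KC; apply: perm_cat.
  apply: perm_trans _ (L_vt HA a1); rewrite -map_comp; exact: perm_refl.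
apply: perm_cat; last by [].
apply: perm_trans _ (L_vt HB b1); rewrite -map_comp; exact: perm_refl.
Qed.

Lemma cardG : #|GV VA VB| = n + n + 2.
Proof. by rewrite !card_sum card_bool (srg_card HA) (srg_card HB). Qed.

End Desc.

Record pkg := Pkg { pV : finType; pe : rel pV; pk : pV -> nat }.
Arguments pe : clear implicits.
Arguments pk : clear implicits.

Section Omega.
Variables (n d lam mu : nat).

Definition GoodW (X : pkg) : Prop :=
  exists (VA VB : finType) (eA : rel VA) (eB : rel VB) (a1 : VA) (b1 : VB),
    [/\ srg eA n d lam mu, srg eB n d lam mu &
        X = @Pkg (GV VA VB) (Gedge eA a1 eB b1) (kap eA eB a1 b1)].

Definition WSd (D : nat * nat * nat * nat) : seq nat :=
  mkseq (fun k => Wd n d lam mu k D) (n + n + 2).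

Lemma goodW_self X : GoodW X -> forall x, wstar (pe X) x x = WSd (dself (pk X x)).
Proof.
move=> [VA [VB [eA [eB [a1 [b1 [HA HB ->]]]]]]] x /=.
rewrite /wstar /WSd (cardG HA HB) -(kap_self eA eB a1 b1 x).
by apply: eq_mkseq => k; rewrite (walksE a1 b1 HA HB).
Qed.

Lemma goodW_list X (h : nat -> nat) : GoodW X -> forall x,
  perm_eq [seq pickle (wstar (pe X) x y, h (pk X y)) | y <- enum (pV X)]
          [seq pickle (WSd D, h (kd D)) | D <- DC n d lam mu (pk X x)].
Proof.
move=> [VA [VB [eA [eB [a1 [b1 [HA HB ->]]]]]]] x /=.
have -> : [seq pickle (wstar (Gedge eA a1 eB b1) x y, h (kap eA eB a1 b1 y)) | y <- enum (GV VA VB)]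
  = [seq pickle (WSd D, h (kd D)) | D <- [seq desc eA eB a1 b1 x z | z <- enum (GV VA VB)]].
  rewrite -map_comp; apply: eq_map => y /=.
  rewrite (kap_desc eA eB a1 b1 x y) /wstar /WSd (cardG HA HB); congr (pickle (_, _)).
  by apply: eq_mkseq => k; rewrite (walksE a1 b1 HA HB).
by apply: perm_map; apply: desc_perm.
Qed.

Lemma goodW_kap X : GoodW X -> perm_eq [seq pk X x | x <- enum (pV X)] (KC n d lam mu).
Proof. by move=> [VA [VB [eA [eB [a1 [b1 [HA HB ->]]]]]]] /=; apply: kap_perm. Qed.

Lemma omega_good r : forall X Y, GoodW X -> GoodW Y -> forall x y, pk X x = pk Y y ->
  omega_v (pe X) r x = omega_v (pe Y) r y.
Proof.
elim: r => [|r IH] X Y gX gY x y hxy /=.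
  by rewrite (goodW_self gX) (goodW_self gY) hxy.
set h := fun k => match [pick z : pV X | pk X z == k] with
   | Some z => omega_v (pe X) r z
   | None => match [pick z : pV Y | pk Y z == k] with
             | Some z => omega_v (pe Y) r z | None => 0 end end.
have hX z : omega_v (pe X) r z = h (pk X z).
  rewrite /h; case: pickP => [z0 /eqP h0|]; first by apply: IH.
  by move/(_ z); rewrite eqxx.
have hY z : omega_v (pe Y) r z = h (pk Y z).
  rewrite /h; case: pickP => [z0 /eqP h0|_]; first by apply: IH.
  case: pickP => [z0 /eqP h0|]; first by apply: IH.
  by move/(_ z); rewrite eqxx.
rewrite (IH X Y gX gY x y hxy); congr (pickle (_, _)); apply: msetn_perm.
rewrite (eq_map (g := fun z => pickle (wstar (pe X) x z, h (pk X z)))); last by move=> z; rewrite hX.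
rewrite [X in perm_eq _ X](eq_map (g := fun z => pickle (wstar (pe Y) y z, h (pk Y z)))); last by move=> z; rewrite hY.
apply: perm_trans (goodW_list h gX x) _.
by rewrite hxy perm_sym; apply: goodW_list.
Qed.

Lemma omega_eq r X Y : GoodW X -> GoodW Y ->
  omega (pe X) r = omega (pe Y) r.
Proof.
move=> gX gY; apply: msetn_perm.
set h := fun k => match [pick z : pV X | pk X z == k] with
   | Some z => omega_v (pe X) r z
   | None => match [pick z : pV Y | pk Y z == k] with
             | Some z => omega_v (pe Y) r z | None => 0 end end.
have hX z : omega_v (pe X) r z = h (pk X z).
  rewrite /h; case: pickP => [z0 /eqP h0|]; first by apply: omega_good.
  by move/(_ z); rewrite eqxx.
have hY z : omega_v (pe Y) r z = h (pk Y z).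
  rewrite /h; case: pickP => [z0 /eqP h0|_]; first by apply: omega_good.
  case: pickP => [z0 /eqP h0|]; first by apply: omega_good.
  by move/(_ z); rewrite eqxx.
rewrite (eq_map hX) (eq_map hY) (map_comp h (pk X)) (map_comp h (pk Y)).
apply: perm_map; apply: perm_trans (goodW_kap gX) _.
by rewrite perm_sym; apply: goodW_kap.
Qed.

End Omega.

Definition dec (c : nat) : nat * seq nat := odflt (0, [::]) (unpickle c).
Definition trunc (c : nat) : nat := (dec c).1.
Definition kids (c : nat) : seq nat := (dec c).2.
Definition deg (c : nat) : nat := size (kids c).
Definition rc (c : nat) : option nat := odflt (Some 0) (unpickle c).
Definition isC (c : nat) : bool := (deg c == 3) && has (fun k => deg k == 1) (kids c).
Definition newcol (c : nat) : option nat :=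
  if rc (iter 3 trunc c) == None then None else if has isC (kids c) then Some 1 else Some 0.

Fixpoint F (r : nat) (c : nat) : nat :=
  match r with
  | 0 => pickle (newcol c)
  | r'.+1 => pickle (F r' (trunc c), msetn [seq F r' k | k <- kids c & ~~ isC k])
  end.

Lemma FS r c : F r.+1 c = pickle (F r (trunc c), msetn [seq F r k | k <- kids c & ~~ isC k]).
Proof. by []. Qed.

Lemma CS (V : finType) (e : rel V) col r x :
  cr e col r.+1 x = pickle (cr e col r x, msetn [seq cr e col r y | y <- enum V & e x y]).
Proof. by []. Qed.

Section CR.
Variables (V : finType) (e : rel V) (col : V -> option nat).

Lemma dec_cr r x : dec (cr e col r.+1 x) = (cr e col r x, msetn [seq cr e col r y | y <- enum V & e x y]).
Proof. by rewrite /= /dec pickleK. Qed.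

Lemma trunc_cr r x : trunc (cr e col r.+1 x) = cr e col r x.
Proof. by rewrite /trunc dec_cr. Qed.

Lemma kids_cr r x : kids (cr e col r.+1 x) = msetn [seq cr e col r y | y <- enum V & e x y].
Proof. by rewrite /kids dec_cr. Qed.

Lemma rc_cr x : rc (cr e col 0 x) = col x.
Proof. by rewrite /rc (_ : cr e col 0 x = pickle (col x)) // pickleK. Qed.

Lemma iter_trunc k m x : iter k trunc (cr e col (m + k) x) = cr e col m x.
Proof.
elim: k m => [|k IH] m; first by rewrite addn0.
by rewrite iterSr addnS trunc_cr IH.
Qed.

Lemma deg_cr r x : deg (cr e col r.+1 x) = count (e x) (enum V).
Proof. by rewrite /deg kids_cr /msetn size_sort size_map size_filter. Qed.

Lemma has_msetn (P : pred nat) s : has P (msetn s) = has P s.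
Proof. by apply: perm_has; apply: msetnP. Qed.

Lemma isC_cr r x : isC (cr e col r.+2 x) =
  (count (e x) (enum V) == 3) && has (fun y => count (e y) (enum V) == 1) [seq y <- enum V | e x y].
Proof.
rewrite /isC deg_cr kids_cr has_msetn has_map; congr (_ && _).
by apply: eq_in_has => y _ /=; rewrite deg_cr.
Qed.

Lemma cr_ext (col2 : V -> option nat) : col =1 col2 -> forall r x, cr e col r x = cr e col2 r x.
Proof.
move=> hc; elim=> [|r IH] x /=; first by rewrite hc.
by rewrite IH; congr (pickle (_, msetn _)); apply: eq_map.
Qed.
End CR.

Section Decode.
Variables (V W : finType) (e : rel V) (col : V -> option nat) (eW : rel W) (iota : W -> V) (c0 : V).
Hypothesis hinj : injective iota.
Hypothesis hc0 : forall w, iota w != c0.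
Hypothesis hnb : forall w y, e (iota w) y -> y != c0 -> exists w', y = iota w'.
Hypothesis he : forall w w', e (iota w) (iota w') = eW w w'.
Hypothesis hC : forall r y, isC (cr e col r.+2 y) = (y == c0).

Definition decol (w : W) : option nat :=
  if col (iota w) == None then None else if e (iota w) c0 then Some 1 else Some 0.

Lemma nbr_perm w : perm_eq [seq y <- enum V | e (iota w) y && (y != c0)] [seq iota w' | w' <- enum W & eW w w'].
Proof.
apply: uniq_perm.
- by apply: filter_uniq; apply: enum_uniq.
- by rewrite map_inj_uniq //; apply: filter_uniq; apply: enum_uniq.
move=> y; rewrite mem_filter mem_enum andbT; apply/idP/idP.
  move=> /andP [h1 h2]; have [w' hy] := hnb h1 h2; rewrite hy in h1 *.
  by apply: map_f; rewrite mem_filter mem_enum -he h1.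
move=> /mapP [w']; rewrite mem_filter mem_enum => /andP [h _] ->.
by rewrite he h hc0.
Qed.

Lemma decode r w : F r (cr e col (r + 3) (iota w)) = cr eW decol r w.
Proof.
elim: r w => [|r IH] w.
  change (pickle (newcol (cr e col 3 (iota w))) = pickle (decol w)).
  have := iter_trunc e col 3 0 (iota w); rewrite add0n => hi.
  rewrite /newcol hi (rc_cr e col (iota w)) /decol.
  congr (pickle _); case: (col (iota w) == None) => //.
  rewrite (kids_cr e col 2 (iota w)) has_msetn has_map.
  rewrite (eq_has (a2 := pred1 c0)); last by move=> y; exact: hC.
  by rewrite has_pred1 mem_filter mem_enum andbT.
rewrite addSn FS (trunc_cr e col (r + 3) (iota w)) IH CS; congr (pickle (_, _)).
rewrite (kids_cr e col (r + 3) (iota w)); apply: msetn_perm.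
have h1 := msetnP [seq cr e col (r + 3) y | y <- enum V & e (iota w) y].
apply: perm_trans (perm_map _ (perm_filter _ h1)) _.
rewrite filter_map -map_comp -filter_predI.
rewrite (eq_filter (a2 := fun y => e (iota w) y && (y != c0))); last first.
  move=> y /=; rewrite (_ : r + 3 = r.+1.+2); last by rewrite addnS addnS addnS addn0.
  rewrite (hC r.+1 y) andbC //.
apply: perm_trans (perm_map _ (nbr_perm w)) _.
have E : [seq (F r \o cr e col (r + 3)) x | x <- [seq iota w' | w' <- enum W & eW w w']] =
   [seq cr eW decol r w' | w' <- enum W & eW w w'].
  by rewrite -map_comp; apply: eq_map => w'; exact: IH.
rewrite E; exact: perm_refl.
Qed.
End Decode.

Section GFacts.
Variables (n d lam mu : nat) (VA VB : finType) (eA : rel VA) (eB : rel VB) (a1 : VA) (b1 : VB).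
Hypothesis HA : srg eA n d lam mu.
Hypothesis HB : srg eB n d lam mu.
Notation G := (Gedge eA a1 eB b1).
Notation cc := (inr false : GV VA VB).
Notation pp := (inr true : GV VA VB).

Lemma countE (T : finType) (P : pred T) : count P (enum T) = \sum_(z | P z) 1.
Proof. by rewrite sumE_enum sum1_count. Qed.

Lemma degA a : count (G (inl (inl a))) (enum (GV VA VB)) = d + (a == a1).
Proof. by rewrite countE (nbrA eA eB a1 b1 a) -countE (srg_deg HA) muln1. Qed.

Lemma degB b : count (G (inl (inr b))) (enum (GV VA VB)) = d + (b == b1).
Proof. by rewrite countE (nbrB eA eB a1 b1 b) -countE (srg_deg HB) muln1. Qed.

Lemma degC : count (G cc) (enum (GV VA VB)) = 3.
Proof. by rewrite countE (nbrC eA eB a1 b1). Qed.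

Lemma degP : count (G pp) (enum (GV VA VB)) = 1.
Proof. by rewrite countE (nbrP eA eB a1 b1). Qed.

Lemma isC_G col r y : isC (cr G col r.+2 y) = (y == cc).
Proof.
rewrite isC_cr.
case: y => [[a|b]|[]].
- rewrite degA /=; case E: (d + (a == a1) == 3) => //=.
  apply/negbTE/hasPn => z; rewrite mem_filter mem_enum andbT.
  case: z => [[a'|b']|[]] //= hz.
    rewrite degA; move: E; case: (a == a1); case: (a' == a1) => /=; lia.
  by rewrite degC.
- rewrite degB /=; case E: (d + (b == b1) == 3) => //=.
  apply/negbTE/hasPn => z; rewrite mem_filter mem_enum andbT.
  case: z => [[a'|b']|[]] //= hz.
    rewrite degB; move: E; case: (b == b1); case: (b' == b1) => /=; lia.
  by rewrite degC.
- by rewrite degP.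
- rewrite degC /=; apply/hasP; exists pp; last by rewrite degP.
  by rewrite mem_filter mem_enum.
Qed.

Fixpoint kappa (r : nat) (b : bool) : nat :=
  match r with
  | 0 => pickle (if b then None else Some 1 : option nat)
  | r'.+1 => pickle (kappa r' b, [::] : seq nat)
  end.

Lemma decodeP col r : F r (cr G col (r + 3) pp) = kappa r (col pp == None).
Proof.
elim: r => [|r IH].
  change (pickle (newcol (cr G col 3 pp)) = kappa 0 (col pp == None)).
  have := iter_trunc G col 3 0 pp; rewrite add0n => hi.
  rewrite /newcol hi (rc_cr G col pp).
  case: (col pp == None) => //.
  rewrite (kids_cr G col 2 pp) has_msetn has_map.
  rewrite (eq_has (a2 := pred1 cc)); last by move=> y; exact: isC_G.
  by rewrite has_pred1 mem_filter mem_enum.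
rewrite addSn FS (trunc_cr G col (r + 3) pp) IH (kids_cr G col (r + 3) pp).
have -> : [seq k <- msetn [seq cr G col (r + 3) y | y <- enum (GV VA VB) & G pp y] | ~~ isC k] = [::].
  apply/eqP; rewrite -size_eq0 size_filter (permP (msetnP _)) count_map.
  rewrite (eq_in_count (a2 := pred0)) ?count_pred0 // => y.
  rewrite mem_filter => /andP [hy _].
  case: y hy => [[a|b]|[]] hy; try by [].
  change (~~ isC (cr G col (r + 3) cc) = false).
  rewrite (_ : r + 3 = r.+1.+2); last by rewrite addnS addnS addnS addn0.
  by rewrite isC_G.
by [].
Qed.

Lemma decA col r a :
  F r (cr G col (r + 3) (inl (inl a))) = cr eA (decol G col (fun a => inl (inl a)) cc) r a.
Proof.
apply: (@decode _ _ G col eA (fun a => inl (inl a)) cc).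
- by move=> x y [].
- by [].
- move=> w [[a'|b']|[]] // _ _; by exists a'.
- by [].
- exact: isC_G.
Qed.

Lemma decB col r b :
  F r (cr G col (r + 3) (inl (inr b))) = cr eB (decol G col (fun b => inl (inr b)) cc) r b.
Proof.
apply: (@decode _ _ G col eB (fun b => inl (inr b)) cc).
- by move=> x y [].
- by [].
- move=> w [[a'|b']|[]] // _ _; by exists b'.
- by [].
- exact: isC_G.
Qed.

End GFacts.

Record cpkg := CPkg { cV : finType; ce : rel cV; ccol : cV -> option nat; ck : cV -> nat }.
Arguments ce : clear implicits.
Arguments ccol : clear implicits.
Arguments ck : clear implicits.

Section CRType.
Variables (n d lam mu : nat).

Definition GoodC (X : cpkg) : Prop :=
  exists (V : finType) (e : rel V) (a1 : V),
    srg e n d lam mu /\ X = @CPkg V e (indiv1 a1) (fun y => rel3 e y a1).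

Lemma goodC_col X : GoodC X -> forall x, ccol X x = if ck X x == 0 then Some 1 else Some 0.
Proof. by move=> [V [e [a1 [H ->]]]] x /=; rewrite rel3_0. Qed.

Lemma goodC_nbr X : GoodC X -> forall x,
  perm_eq [seq ck X z | z <- enum (cV X) & ce X x z] (CN n d lam mu (ck X x)).
Proof. by move=> [V [e [a1 [H ->]]]] x /=; apply: L_nbr. Qed.

Lemma goodC_list X : GoodC X -> perm_eq [seq ck X z | z <- enum (cV X)] (Canon1 n d lam mu).
Proof. by move=> [V [e [a1 [H ->]]]] /=; apply: L_vt. Qed.

Lemma cr_good r : forall X Y, GoodC X -> GoodC Y -> forall x y, ck X x = ck Y y ->
  cr (ce X) (ccol X) r x = cr (ce Y) (ccol Y) r y.
Proof.
elim: r => [|r IH] X Y gX gY x y hxy.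
  by rewrite (_ : cr (ce X) (ccol X) 0 x = pickle (ccol X x)) // (_ : cr (ce Y) (ccol Y) 0 y = pickle (ccol Y y)) //
    (goodC_col gX) (goodC_col gY) hxy.
rewrite !CS (IH X Y gX gY x y hxy); congr (pickle (_, _)); apply: msetn_perm.
set h := fun k => match [pick z : cV X | ck X z == k] with
   | Some z => cr (ce X) (ccol X) r z
   | None => match [pick z : cV Y | ck Y z == k] with
             | Some z => cr (ce Y) (ccol Y) r z | None => 0 end end.
have hX z : cr (ce X) (ccol X) r z = h (ck X z).
  rewrite /h; case: pickP => [z0 /eqP h0|]; first by apply: IH.
  by move/(_ z); rewrite eqxx.
have hY z : cr (ce Y) (ccol Y) r z = h (ck Y z).
  rewrite /h; case: pickP => [z0 /eqP h0|_]; first by apply: IH.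
  case: pickP => [z0 /eqP h0|]; first by apply: IH.
  by move/(_ z); rewrite eqxx.
rewrite (eq_map hX) (eq_map hY) (map_comp h (ck X)) (map_comp h (ck Y)).
apply: perm_map; apply: perm_trans (goodC_nbr gX x) _.
by rewrite hxy perm_sym; apply: goodC_nbr.
Qed.

Lemma cr_list r X Y : GoodC X -> GoodC Y ->
  perm_eq [seq cr (ce X) (ccol X) r x | x <- enum (cV X)] [seq cr (ce Y) (ccol Y) r y | y <- enum (cV Y)].
Proof.
move=> gX gY.
set h := fun k => match [pick z : cV X | ck X z == k] with
   | Some z => cr (ce X) (ccol X) r z
   | None => match [pick z : cV Y | ck Y z == k] with
             | Some z => cr (ce Y) (ccol Y) r z | None => 0 end end.
have hX z : cr (ce X) (ccol X) r z = h (ck X z).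
  rewrite /h; case: pickP => [z0 /eqP h0|]; first by apply: cr_good.
  by move/(_ z); rewrite eqxx.
have hY z : cr (ce Y) (ccol Y) r z = h (ck Y z).
  rewrite /h; case: pickP => [z0 /eqP h0|_]; first by apply: cr_good.
  case: pickP => [z0 /eqP h0|]; first by apply: cr_good.
  by move/(_ z); rewrite eqxx.
rewrite (eq_map hX) (eq_map hY) (map_comp h (ck X)) (map_comp h (ck Y)).
apply: perm_map; apply: perm_trans (goodC_list gX) _.
by rewrite perm_sym; apply: goodC_list.
Qed.

Lemma crAB (VA VB : finType) (eA : rel VA) (eB : rel VB) (a1 : VA) (b1 : VB) r :
  srg eA n d lam mu -> srg eB n d lam mu ->
  perm_eq [seq cr eA (indiv1 a1) r x | x <- enum VA] [seq cr eB (indiv1 b1) r y | y <- enum VB].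
Proof.
move=> HA HB.
apply: (@cr_list r (@CPkg VA eA (indiv1 a1) (fun y => rel3 eA y a1)) (@CPkg VB eB (indiv1 b1) (fun y => rel3 eB y b1))).
  by exists VA, eA, a1.
by exists VB, eB, b1.
Qed.
End CRType.

Definition Phi (n : nat) (L : seq nat) : seq nat :=
  msetn [seq F n (iter n.-1 trunc t) | t <- L & ~~ isC t].

Lemma filterGL (VA VB : finType) (f : GV VA VB -> nat) :
  perm_eq [seq f y | y <- enum (GV VA VB) & y != inr false]
    ([seq f (inl (inl a)) | a <- enum VA] ++ [seq f (inl (inr b)) | b <- enum VB] ++ [:: f (inr true)]).
Proof.
apply: perm_trans (perm_map f (perm_filter _ (enumG VA VB))) _.
rewrite /GL !filter_cat !filter_map !map_cat -!map_comp.
exact: perm_refl.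
Qed.

Section Phi.
Variables (n d lam mu : nat) (VA VB : finType) (eA : rel VA) (eB : rel VB) (a1 : VA) (b1 : VB).
Hypothesis HA : srg eA n d lam mu.
Hypothesis HB : srg eB n d lam mu.
Notation G := (Gedge eA a1 eB b1).
Notation cc := (inr false : GV VA VB).
Notation pp := (inr true : GV VA VB).

Lemma n_pos : 0 < n.
Proof. by rewrite -(srg_card HA); apply/card_gt0P; exists a1. Qed.

Lemma Phi_G col :
  Phi n (WL1 G col) = msetn ([seq cr eA (decol G col (fun a => inl (inl a)) cc) n a | a <- enum VA] ++
     [seq cr eB (decol G col (fun b => inl (inr b)) cc) n b | b <- enum VB] ++ [:: kappa n (col pp == None)]).
Proof.
apply: msetn_perm; rewrite /WL1.
apply: perm_trans (perm_map _ (perm_filter _ (msetnP _))) _.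
have hR : #|GV VA VB| = (n + n).+2 by rewrite (cardG HA HB) addn2.
rewrite filter_map -map_comp hR.
rewrite (eq_filter (a2 := fun y => y != cc)); last by move=> y; rewrite /= (@isC_G n d lam mu VA VB eA eB a1 b1 HA HB).
have hn := n_pos.
rewrite (eq_map (g := fun y => F n (cr G col (n + 3) y))); last first.
  move=> y /=; congr (F n _).
  have := iter_trunc G col n.-1 (n + 3) y.
  by rewrite (_ : n + 3 + n.-1 = (n + n).+2) //; lia.
apply: perm_trans (filterGL _) _.
rewrite (eq_map (@decA n d lam mu VA VB eA eB a1 b1 HA HB col n)) (eq_map (@decB n d lam mu VA VB eA eB a1 b1 HA HB col n)) (@decodeP n d lam mu VA VB eA eB a1 b1 HA HB col n).
exact: perm_refl.
Qed.

End Phi.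

Definition colsA (VA VB : finType) (a1 : VA) (v : GV VA VB) : VA -> option nat :=
  match v with inl (inl u) => indiv (indiv1 a1) u | _ => indiv1 a1 end.
Definition colsB (VA VB : finType) (b1 : VB) (v : GV VA VB) : VB -> option nat :=
  match v with inl (inr w) => indiv (indiv1 b1) w | _ => indiv1 b1 end.

Lemma cancel2 (s m1 m2 t : seq nat) : perm_eq (s ++ m1 ++ t) (s ++ m2 ++ t) -> perm_eq m1 m2.
Proof. by rewrite perm_cat2l perm_cat2r. Qed.

Lemma msetn_id s : msetn (msetn s) = msetn s.
Proof. by apply: msetn_perm; apply: msetnP. Qed.

Section Final.
Variables (n d lam mu : nat) (VA VB : finType) (eA : rel VA) (eB : rel VB) (a1 : VA) (b1 : VB).
Hypothesis HA : srg eA n d lam mu.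
Hypothesis HB : srg eB n d lam mu.
Notation G := (Gedge eA a1 eB b1).
Notation cc := (inr false : GV VA VB).
Notation pp := (inr true : GV VA VB).

Definition fT (v : GV VA VB) : nat :=
  pickle (msetn ([seq cr eA (colsA a1 v) n a | a <- enum VA] ++
     [seq cr eB (colsB b1 v) n b | b <- enum VB] ++ [:: kappa n (v == pp)])).

Lemma T_eq v : pickle (Phi n (WL1 G (indiv (@uncolored _) v))) = fT v.
Proof.
rewrite (Phi_G a1 b1 HA HB) /fT; congr (pickle (msetn (_ ++ _ ++ [:: kappa n _]))).
- apply: eq_map => a; apply: cr_ext => a' /=.
  rewrite /decol /indiv /uncolored /colsA /indiv1.
  case: v => [[u|w]|[]] /=; rewrite /indiv /= //.
  by rewrite (_ : (inl (inl a') == inl (inl u) :> GV VA VB) = (a' == u)) //; case: (a' == u).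
- apply: eq_map => b; apply: cr_ext => b' /=.
  rewrite /decol /indiv /uncolored /colsB /indiv1.
  case: v => [[u|w]|[]] /=; rewrite /indiv /= //.
  by rewrite (_ : (inl (inr b') == inl (inr w) :> GV VA VB) = (b' == w)) //; case: (b' == w).
- by case: v => [[u|w]|[]].
Qed.

Lemma WL32_map : perm_eq [seq pickle (Phi n (odflt [::] (unpickle c))) | c <- WL32 G (@uncolored _)]
  [seq fT v | v <- GL VA VB].
Proof.
rewrite /WL32; apply: perm_trans (perm_map _ (msetnP _)) _.
rewrite -map_comp.
rewrite [X in perm_eq X _](eq_map (g := fT)); last first.
  move=> v; change (pickle (Phi n (odflt [::] (unpickle (pickle (WL1 G (indiv (@uncolored _) v)))))) = fT v).
  by rewrite pickleK; exact: T_eq.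
exact: perm_map (enumG VA VB).
Qed.

Definition LA (col : VA -> option nat) := [seq cr eA col n a | a <- enum VA].
Definition LB (col : VB -> option nat) := [seq cr eB col n b | b <- enum VB].

Lemma fT_A u : fT (inl (inl u)) = pickle (msetn (LA (indiv (indiv1 a1) u) ++ LB (indiv1 b1) ++ [:: kappa n false])).
Proof. by []. Qed.
Lemma fT_B w : fT (inl (inr w)) = pickle (msetn (LA (indiv1 a1) ++ LB (indiv (indiv1 b1) w) ++ [:: kappa n false])).
Proof. by []. Qed.
Lemma fT_C : fT cc = pickle (msetn (LA (indiv1 a1) ++ LB (indiv1 b1) ++ [:: kappa n false])).
Proof. by []. Qed.
Lemma fT_P : fT pp = pickle (msetn (LA (indiv1 a1) ++ LB (indiv1 b1) ++ [:: kappa n true])).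
Proof. by []. Qed.

End Final.

Lemma part2 (n d lam mu : nat) (VA VB : finType) (eA : rel VA) (eB : rel VB) (a1 : VA) (b1 : VB) :
  srg eA n d lam mu -> srg eB n d lam mu ->
  WL32 (Gedge eA a1 eB b1) (@uncolored _) = WL32 (Gedge eA a1 eA a1) (@uncolored _) ->
  WL32 eA (indiv1 a1) = WL32 eB (indiv1 b1).
Proof.
move=> HA HB E.
have P := WL32_map a1 b1 HA HB.
have Q := WL32_map a1 a1 HA HA.
rewrite E in P.
have R : perm_eq [seq fT n eA eB a1 b1 v | v <- GL VA VB] [seq fT n eA eA a1 a1 v | v <- GL VA VA].
  by apply: perm_trans Q; rewrite perm_sym.
move: R; rewrite /GL !map_cat -!map_comp.
set LA' := LA n eA (indiv1 a1).
have hAB : perm_eq (LB n eB (indiv1 b1)) LA'.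
  rewrite perm_sym; exact: crAB HA HB.
rewrite (eq_map (fT_A n eA eB a1 b1)) (eq_map (fT_A n eA eA a1 a1)).
rewrite (eq_map (fT_B n eA eB a1 b1)) (eq_map (fT_B n eA eA a1 a1)).
rewrite !map_cons !fT_C !fT_P.
have eLB col : LB n eA col = LA n eA col by [].
rewrite !eLB -/LA'.
have mid x y : msetn (x ++ LB n eB (indiv1 b1) ++ y) = msetn (x ++ LA' ++ y).
  by apply: msetn_perm; rewrite perm_cat2l perm_cat2r.
rewrite !mid.
have eX : [seq pickle (msetn (LA n eA (indiv (indiv1 a1) u) ++ LB n eB (indiv1 b1) ++ [:: kappa n false])) | u <- Finite.enum VA]
  = [seq pickle (msetn (LA n eA (indiv (indiv1 a1) u) ++ LA' ++ [:: kappa n false])) | u <- Finite.enum VA].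
  by apply: eq_map => u; rewrite mid.
rewrite eX.
have -> : [seq fT n eA eB a1 b1 v | v <- [::]] = [::] by [].
have -> : [seq fT n eA eA a1 a1 v | v <- [::]] = [::] by [].
move/cancel2 => M.
pose Th := fun c : nat => pickle (msetn (mrem (LA' ++ [:: kappa n false]) (odflt [::] (unpickle c)))).
have M2 := perm_map Th M.
rewrite -!map_comp in M2.
rewrite (eq_map (g := fun w => pickle (WL1 eB (indiv (indiv1 b1) w)))) in M2; last first.
  move=> w; rewrite /= /Th pickleK; congr pickle.
  rewrite /WL1 (srg_card HB); apply: msetn_perm; apply: mremP.
  apply: perm_trans (msetnP _) _; rewrite -catA perm_cat2l perm_catC; exact: perm_refl.
rewrite [X in perm_eq _ X](eq_map (g := fun w => pickle (WL1 eA (indiv (indiv1 a1) w)))) in M2; last first.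
  move=> w; rewrite /= /Th pickleK; congr pickle.
  rewrite /WL1 (srg_card HA); apply: msetn_perm; apply: mremP.
  apply: perm_trans (msetnP _) _; rewrite -catA perm_cat2l perm_catC; exact: perm_refl.
rewrite -!enumT in M2.
rewrite /WL32; apply: msetn_perm; rewrite perm_sym; exact: M2.
Qed.



Theorem lemma6p4 (VA VB : finType) (eA : rel VA) (eB : rel VB)
  (n d lam mu : nat) (a1 : VA) (b1 : VB) :
  srg eA n d lam mu -> srg eB n d lam mu ->
  ((forall r : nat,
      omega (Gedge eA a1 eB b1) r = omega (Gedge eA a1 eA a1) r)
   /\ omega_bullet (Gedge eA a1 eB b1) = omega_bullet (Gedge eA a1 eA a1))
  /\
  (WL32 eA (indiv1 a1) <> WL32 eB (indiv1 b1) ->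
   WL32 (Gedge eA a1 eB b1) (@uncolored _) <> WL32 (Gedge eA a1 eA a1) (@uncolored _)).
Proof.
move=> HA HB; split.
  have gG : GoodW n d lam mu (@Pkg (GV VA VB) (Gedge eA a1 eB b1) (kap eA eB a1 b1)).
    by exists VA, VB, eA, eB, a1, b1.
  have gH : GoodW n d lam mu (@Pkg (GV VA VA) (Gedge eA a1 eA a1) (kap eA eA a1 a1)).
    by exists VA, VA, eA, eA, a1, a1.
  have om r := omega_eq r gG gH.
  split; first exact: om.
  by rewrite /omega_bullet (cardG HA HB) (cardG HA HA); exact: om.
move=> hne hG; apply: hne; exact: part2 HA HB hG.
Qed.
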